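(* Let $n,m\in\mathbb{N}$ with $\gcd(n,m)=1$ and let $\{R_j^{nm,n}\}_{j\in I_{nm,n}}$ be a system of representatives of the right cosets in $\Gamma_0(nm)\backslash\Gamma_0(n)$. Then for every $j\in I_{nm,n}$ there exists a matrix $A(j)\in X_m^\star$ such that $B_m R_j^{nm,n}A(j)^{-1}\in\Gamma_0(n)$, and the map $j\mapsto A(j)$ is a bijection from $I_{nm,n}$ onto $X_m^\star$.
   Context: $\Gamma_0(n)=\{\begin{pmatrix}a&b\\c&d\end{pmatrix}\in SL(2,\mathbb{Z}):n\mid c\}$. $B_m=\begin{pmatrix}m&0\\0&1\end{pmatrix}$. $X_m^\star=\{\begin{pmatrix}c&b\\0&m/c\end{pmatrix}:c\ge1,\ c\mid m,\ 0\le b\le m/c-1,\ \gcd(c,b,m/c)=1\}$. $I_{nm,n}=\{1,\dots,[\Gamma_0(n):\Gamma_0(nm)]\}$. *)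

(* Defs.v *)
From HB Require Import structures.
From mathcomp Require Import all_boot all_order all_algebra.
Set Implicit Arguments. Unset Strict Implicit. Unset Printing Implicit Defensive.
Import Order.TTheory GRing.Theory Num.Theory.
Local Open Scope ring_scope.

Definition mx2 {R : Type} (a b c d : R) : 'M[R]_2 :=
  \matrix_(i < 2, j < 2)
    if (i : nat) == 0%N then (if (j : nat) == 0%N then a else b)
    else (if (j : nat) == 0%N then c else d).

Definition Gamma0 (n : nat) : pred 'M[int]_2 :=
  fun g => (\det g == 1) && (n%:Z %| g ord_max ord0)%Z.

Definition Bm (m : nat) : 'M[int]_2 := mx2 (m%:Z) 0 0 1.

Definition Xstar (m : nat) : pred 'M[int]_2 :=
  fun A => let c := A ord0 ord0 in let b := A ord0 ord_max in
    [&& A == mx2 c b 0 (m%:Z %/ c)%Z, 1 <= c, (c %| m%:Z)%Z,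
        0 <= b, b <= (m%:Z %/ c)%Z - 1 &
        gcdz (gcdz c b) (m%:Z %/ c)%Z == 1].

Definition toQ (A : 'M[int]_2) : 'M[rat]_2 := map_mx (fun z : int => z%:~R) A.

Definition in_right_coset (N : nat) (r g : 'M[int]_2) : Prop :=
  exists2 h, h \in Gamma0 N & g = h *m r.

(* R_0, ..., R_{k-1} (indexing I_{nm,n} = {1..k} shifted to 'I_k) is a system of
   representatives of the right cosets Gamma_0(nm) \ Gamma_0(n). *)
Definition right_coset_reps (n m k : nat) (R : 'I_k -> 'M[int]_2) : Prop :=
  [/\ forall j, R j \in Gamma0 n,
      forall g, g \in Gamma0 n -> exists j, in_right_coset (n * m) (R j) g
    & forall i j g, in_right_coset (n * m) (R i) g ->
                    in_right_coset (n * m) (R j) g -> i = j].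

Definition BRAinv_in_Gamma0 (n m : nat) (R A : 'M[int]_2) : Prop :=
  exists2 g, g \in Gamma0 n & toQ g = toQ (Bm m) *m toQ R *m invmx (toQ A).

(* Main.v *)
Require Import Defs.
From HB Require Import structures.
From mathcomp Require Import all_boot all_order all_algebra.
From mathcomp Require Import zify ring lra.
Import Order.TTheory GRing.Theory Num.Theory.
Local Open Scope ring_scope.

Lemma mx2E (R : Type) (M : 'M[R]_2) : M = mx2 (M ord0 ord0) (M ord0 ord_max) (M ord_max ord0) (M ord_max ord_max).
Proof. by apply/matrixP=> i j; rewrite !mxE; case: i => [[|[|]]] //= ?; case: j => [[|[|]]] //= ?; congr (M _ _); apply: val_inj. Qed.

Lemma mx2_ex {R : Type} (M : 'M[R]_2) : exists a b c d, M = mx2 a b c d.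
Proof. by do 4 eexists; exact: mx2E. Qed.

Lemma mx2_inj {R : Type} (a b c d a' b' c' d' : R) : mx2 a b c d = mx2 a' b' c' d' ->
  [/\ a = a', b = b', c = c' & d = d'].
Proof.
move=> e; have E i j := congr1 (fun M : 'M[R]_2 => M i j) e.
by move: (E ord0 ord0) (E ord0 ord_max) (E ord_max ord0) (E ord_max ord_max); rewrite !mxE.
Qed.

Lemma mulmx2 {R : comRingType} (a b c d a' b' c' d' : R) :
  mx2 a b c d *m mx2 a' b' c' d' = mx2 (a*a' + b*c') (a*b' + b*d') (c*a' + d*c') (c*b'+d*d').
Proof.
apply/matrixP=> i j; rewrite !mxE big_ord_recr big_ord1 /= !mxE.
by case: i => [[|[|]]] //= ?; case: j => [[|[|]]] //= ?.
Qed.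

Lemma det2 {R : comRingType} (a b c d : R) : \det (mx2 a b c d) = a * d - b * c.
Proof.
rewrite (expand_det_row _ ord0) big_ord_recr big_ord1 /= !mxE /cofactor /=.
rewrite !det_mx11 !mxE /= expr0 expr1; ring.
Qed.

Lemma Gamma0_mx2 n (a b c d : int) :
  (mx2 a b c d \in Gamma0 n) = (a * d - b * c == 1) && (n%:Z %| c)%Z.
Proof. by rewrite unfold_in /Gamma0 det2 !mxE. Qed.

Lemma Gamma0_mx2P n (a b c d : int) :
  mx2 a b c d \in Gamma0 n <-> a * d - b * c = 1 /\ (n%:Z %| c)%Z.
Proof. by rewrite Gamma0_mx2; split => [/andP[/eqP -> ->]|[-> ->]]. Qed.

Lemma mulXform (p q r s x y z : int) :
  mx2 p q r s *m mx2 x y 0 z = mx2 (p*x) (p*y+q*z) (r*x) (r*y+s*z).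
Proof. by rewrite mulmx2; congr mx2; ring. Qed.

Lemma mulBform (m : nat) (a b c d : int) :
  Bm m *m mx2 a b c d = mx2 (m%:Z * a) (m%:Z * b) c d.
Proof. by rewrite /Bm mulmx2; congr mx2; ring. Qed.

Lemma toQM (X Y : 'M[int]_2) : toQ (X *m Y) = toQ X *m toQ Y.
Proof. by rewrite /toQ map_mxM. Qed.

Lemma toQ_inj : injective toQ.
Proof. move=> X Y e; apply/matrixP=> i j; have := congr1 (fun M : 'M[rat]_2 => M i j) e; rewrite !mxE; exact: intr_inj. Qed.

Lemma toQ_det (X : 'M[int]_2) : \det (toQ X) = (\det X)%:~R.
Proof. by rewrite /toQ -det_map_mx. Qed.

Lemma rel_iff (B R A g : 'M[int]_2) : \det A != 0 ->
  (toQ g = toQ B *m toQ R *m invmx (toQ A) <-> g *m A = B *m R).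
Proof.
move=> dA; have uA : toQ A \in unitmx by rewrite unitmxE unitfE toQ_det intr_eq0.
split=> [e|e].
  by apply: toQ_inj; rewrite !toQM e mulmxKV.
by rewrite -[LHS](mulmxK uA) -(toQM g A) e toQM.
Qed.

Lemma XstarP (m : nat) (X : 'M[int]_2) : X \in Xstar m ->
  exists x y z, X = mx2 x y 0 z /\
    [/\ x * z = m%:Z, 1 <= x, 0 <= y, y < z & gcdz (gcdz x y) z = 1].
Proof.
rewrite unfold_in /Xstar => /and5P[/eqP eX x1 xm y0 /andP[yz g]].
exists (X ord0 ord0), (X ord0 ord_max), (m%:Z %/ X ord0 ord0)%Z; split => //.
split => //; last by move/eqP: g.
- by rewrite mulrC divzK.
- lia.
Qed.

Lemma Xstar_intro (m : nat) (x y z : int) :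
  x * z = m%:Z -> 1 <= x -> 0 <= y -> y < z -> gcdz (gcdz x y) z = 1 ->
  mx2 x y 0 z \in Xstar m.
Proof.
move=> xz x1 y0 yz g.
have x0 : x != 0 by lia.
have ez : (m%:Z %/ x)%Z = z by rewrite -xz mulKz.
rewrite unfold_in /Xstar !mxE /= ez eqxx x1 y0 g eqxx /=.
rewrite andbT; apply/andP; split; last lia.
by apply/dvdzP; exists z; rewrite -xz mulrC.
Qed.

Lemma Xstar_det {m : nat} {X} : (0 < m)%N -> X \in Xstar m -> \det X != 0.
Proof.
move=> m0 /XstarP [x [y [z [-> [xz _ _ _ _]]]]].
rewrite det2 mulr0 subr0 xz; lia.
Qed.

Definition Rel (n m : nat) (R X : 'M[int]_2) : Prop :=
  exists2 g, g \in Gamma0 n & g *m X = Bm m *m R.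

Lemma BRA_iff n m R X : (0 < m)%N -> X \in Xstar m ->
  BRAinv_in_Gamma0 n m R X <-> Rel n m R X.
Proof.
move=> m0 XS; have dX := Xstar_det m0 XS.
split=> -[g gG e]; exists g => //.
  by apply/(rel_iff _ _ _ _ dX).
by apply/(rel_iff _ _ _ _ dX).
Qed.
Lemma dvdz_det (e a b c d : int) : (e %| c)%Z -> (e %| d)%Z ->
  (e %| a * d - b * c)%Z.
Proof.
move=> ec ed; apply: rpredB; [exact: dvdz_mull | exact: dvdz_mull].
Qed.

Lemma exA (n m : nat) (a b c d : int) : (0 < m)%N -> coprime n m ->
  a * d - b * c = 1 -> (n%:Z %| c)%Z ->
  exists x y z p q r s : int,
   [/\ x * z = m%:Z, 1 <= x, 0 <= y, y < z & gcdz (gcdz x y) z = 1] /\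
      (p * s - q * r = 1 /\ (n%:Z %| r)%Z) /\
       [/\ p * x = m%:Z * a, p * y + q * z = m%:Z * b, r * x = c & r * y + s * z = d].
Proof.
move=> m0 cop det nc.
set x := gcdz c m.
have xm : (x %| m%:Z)%Z by apply: dvdz_gcdr.
have xc : (x %| c)%Z by apply: dvdz_gcdl.
have x0 : 0 < x.
  rewrite lt0r gcdz_eq0 negb_and; apply/andP; split; first by apply/orP; right; lia.
  by rewrite /x /gcdz.
pose z := (m%:Z %/ x)%Z; pose r := (c %/ x)%Z.
have ez : z * x = m%:Z by rewrite divzK.
have er : r * x = c by rewrite divzK.
have crz : gcdz r z = 1.
  have : gcdz r z * `|x|%:Z = x by rewrite mulz_gcdl er ez.
  rewrite gtz0_abs // => /eqP; rewrite -subr_eq0 -{2}[x]mul1r -mulrBl mulf_eq0 subr_eq0.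
  by case/orP=> /eqP // e; rewrite e ltxx in x0.
have z0 : 0 < z.
  have : 0 < z * x by rewrite ez; lia.
  by rewrite pmulr_lgt0.
case: (Bezoutz r z) => u [v] bez; rewrite crz in bez.
pose y := ((u * d) %% z)%Z; pose Qd := ((u * d) %/ z)%Z.
have ey : u * d = Qd * z + y by apply: divz_eq.
pose s := d * v + r * Qd.
have hd : r * y + s * z = d.
  have -> : y = u * d - Qd * z by rewrite ey; ring.
  rewrite /s; transitivity (d * (u * r + v * z)); first ring.
  by rewrite bez mulr1.
exists x, y, z, (a * z), (x * b - a * y), r, s.
split; first split.
- by rewrite mulrC.
- lia.
- by apply: modz_ge0; lia.
- by apply: ltz_pmod.
- set e := gcdz (gcdz x y) z.
  suff : (e %| 1)%Z by rewrite dvdz1 => /eqP; rewrite /e /gcdz /= => ->.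
  have ex : (e %| x)%Z by apply: dvdz_trans (dvdz_gcdl _ _) (dvdz_gcdl _ _).
  have ey' : (e %| y)%Z by apply: dvdz_trans (dvdz_gcdl _ _) (dvdz_gcdr _ _).
  have ez' : (e %| z)%Z by apply: dvdz_gcdr.
  have : (e %| a * d - b * c)%Z.
    apply: dvdz_det; first by rewrite -er; apply: dvdz_mull.
    by rewrite -hd; apply: rpredD; apply: dvdz_mull.
  by rewrite det.
split; first split.
- rewrite -det -hd -er; ring.
- have : (n%:Z %| r * x)%Z by rewrite er.
  rewrite Gauss_dvdzl //.
  rewrite /coprimez /=; apply: coprime_dvdr cop; exact: xm.
split.
- rewrite -ez; ring.
- rewrite -ez; ring.
- exact: er.
- exact: hd.
Qed.
Local Close Scope ring_scope.
Lemma key_nat (a b N : nat) : (0 < N)%N -> gcdn (gcdn a b) N = 1%N ->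
  exists s, coprime (a * s + b) N.
Proof.
move=> N0 g1.
pose pi := [pred p : nat | ~~ (p %| b)].
exists (N`_pi); apply/eqP.
set g := gcdn _ _.
have g0 : (0 < g)%N by rewrite gcdn_gt0 N0 orbT.
case: (ltngtP g 1) => //; first by move=> /ltnSE; rewrite leqn0 => /eqP g00; rewrite g00 in g0.
move=> g1'.
have pp := pdiv_prime g1'.
have pg := pdiv_dvd g.
have pN : (pdiv g %| N)%N by apply: dvdn_trans pg (dvdn_gcdr _ _).
have pS : (pdiv g %| a * N`_pi + b)%N by apply: dvdn_trans pg (dvdn_gcdl _ _).
case pb: (pdiv g %| b).
  have pns : ~~ (pdiv g %| N`_pi).
    apply/negP=> ps; have : pi.-nat (pdiv g) by apply: pnat_dvd ps (part_pnat _ _).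
    by rewrite pnatE // inE /= pb.
  have pa : (pdiv g %| a)%N.
    have : (pdiv g %| a * N`_pi)%N by rewrite -(dvdn_addl _ pb).
    by rewrite Euclid_dvdM // (negbTE pns) orbF.
  have : (pdiv g %| gcdn (gcdn a b) N)%N by rewrite !dvdn_gcd pa pb pN.
  by rewrite g1 dvdn1 => /eqP e; rewrite e in pp.
have ps : (pdiv g %| N`_pi)%N.
  have := pN; rewrite -{1}(partnC pi N0) Euclid_dvdM // => /orP[] // ps.
  have : pi^'.-nat (pdiv g) by apply: pnat_dvd ps (part_pnat _ _).
  by rewrite pnatE // !inE /= pb.
have : (pdiv g %| b)%N by rewrite -(dvdn_addr _ (dvdn_mull a ps)).
by rewrite pb.
Qed.
Local Open Scope ring_scope.

Lemma exB (n m : nat) (x y z : int) : (0 < n)%N -> coprime n m -> x * z = m%:Z ->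
  1 <= x -> 0 <= y -> 0 <= z -> gcdz (gcdz x y) z = 1 ->
  exists P Q s : int, P * (z * s + n%:Z * y) + Q * (n%:Z * x) = 1.
Proof.
move=> n0 cop exz x1 y0 z0 g1.
have [x' ex] : exists x' : nat, x = x'%:Z by exists `|x|%N; rewrite gez0_abs //; lia.
have [y' ey] : exists y' : nat, y = y'%:Z by exists `|y|%N; rewrite gez0_abs.
have [z' ez] : exists z' : nat, z = z'%:Z by exists `|z|%N; rewrite gez0_abs.
subst x y z.
have g1' : gcdn (gcdn x' y') z' = 1%N by move: g1; rewrite /gcdz /= => -[].
have exz' : (x' * z')%N = m by move: exz; rewrite -PoszM => -[].
have x0 : (0 < x')%N by lia.
have cz : coprime z' n by rewrite coprime_sym; apply: coprime_dvdr cop; rewrite -exz' dvdn_mull.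
have : gcdn (gcdn z' (n * y')%N) (n * x')%N = 1%N.
  rewrite -gcdnA -muln_gcdr; apply/eqP; change (coprime z' (n * gcdn y' x')%N); rewrite coprimeMr cz /=.
  by rewrite /coprime gcdnA [gcdn z' y']gcdnC gcdnC gcdnA g1'.
case/key_nat; first by rewrite muln_gt0 n0.
move=> s cs.
case: (Bezoutz (z' * s + n * y')%N (n * x')%N) => u [v] bez.
exists u, v, s%:Z.
rewrite -!PoszM -PoszD bez.
by move: cs; rewrite /coprime /gcdz /= => /eqP ->.
Qed.
Lemma uniqX (p q r s p' q' r' s' x y z x' y' z' : int) :
 p*s - q*r = 1 -> p'*s' - q'*r' = 1 ->
 p*x = p'*x' -> p*y + q*z = p'*y' + q'*z' -> r*x = r'*x' -> r*y + s*z = r'*y' + s'*z' ->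
 1 <= x -> 1 <= x' -> 0 <= y -> y < z -> 0 <= y' -> y' < z' ->
 [/\ x = x', y = y' & z = z'].
Proof.
move=> d1 d2 e1 e2 e3 e4 x1 x1' y0 yz y0' yz'.
pose al := s * p' - q * r'; pose be := s * q' - q * s'.
pose ga := p * r' - r * p'; pose de := p * s' - r * q'.
have hx : al * x' = x.
  transitivity (s * (p' * x') - q * (r' * x')); first by rewrite /al; ring.
  by rewrite -e1 -e3 -[RHS]mul1r -d1; ring.
have hy : al * y' + be * z' = y.
  transitivity (s * (p' * y' + q' * z') - q * (r' * y' + s' * z')); first by rewrite /al /be; ring.
  by rewrite -e2 -e4 -[RHS]mul1r -d1; ring.
have hg : ga * x' = 0.
  transitivity (p * (r' * x') - r * (p' * x')); first by rewrite /ga; ring.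
  by rewrite -e1 -e3; ring.
have hz : ga * y' + de * z' = z.
  transitivity (p * (r' * y' + s' * z') - r * (p' * y' + q' * z')); first by rewrite /ga /de; ring.
  by rewrite -e2 -e4 -[RHS]mul1r -d1; ring.
have hd : al * de - be * ga = 1.
  transitivity ((p*s - q*r) * (p'*s' - q'*r')); first by rewrite /al /be /ga /de; ring.
  by rewrite d1 d2 mulr1.
have g0 : ga = 0.
  by move/eqP: hg; rewrite mulf_eq0 => /orP[/eqP //|/eqP h]; move: x1'; rewrite h.
rewrite g0 mul0r add0r in hz; rewrite g0 mulr0 subr0 in hd.
move: hx hy hz hd; clear -x1 x1' y0 yz y0' yz'.
move: al be de => al be de hx hy hz hd.
have al1 : 1 <= al by nia.
have de1 : 1 <= de by nia.
have al_1 : al = 1 by nia.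
have de_1 : de = 1 by nia.
subst al de.
have be0 : be = 0 by nia.
subst be. split; lia.
Qed.
Arguments mx2_inj {R a b c d a' b' c' d'}.
Arguments exA {n m a b c d}.
Arguments exB {n m x y z}.
Arguments uniqX {p q r s p' q' r' s' x y z x' y' z'}.

Lemma Rel_uniq n m R X Y : X \in Xstar m -> Y \in Xstar m ->
  Rel n m R X -> Rel n m R Y -> X = Y.
Proof.
move=> /XstarP[x[y[z[-> [xz x1 y0 yz _]]]]] /XstarP[x'[y'[z'[-> [xz' x1' y0' yz' _]]]]].
case=> g1 g1G e1 [g2 g2G e2].
have [p[q[r[s eg1]]]] := mx2_ex g1; have [p'[q'[r'[s' eg2]]]] := mx2_ex g2.
subst g1 g2; move: g1G g2G => /Gamma0_mx2P[d1 _] /Gamma0_mx2P[d2 _].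
have := e1; rewrite -e2 !mulXform => /mx2_inj[h1 h2 h3 h4].
by have [-> -> ->] := uniqX d1 d2 h1 h2 h3 h4 x1 x1' y0 yz y0' yz'.
Qed.

Lemma part1 n m M : (0 < m)%N -> coprime n m -> M \in Gamma0 n ->
  exists2 X, X \in Xstar m & Rel n m M X.
Proof.
move=> m0 cop; have [a[b[c[d ->]]]] := mx2_ex M; move=> /Gamma0_mx2P[det nc].
have [x[y[z[p[q[r[s [[xz x1 y0 yz g] [[dg nr] [e1 e2 e3 e4]]]]]]]]]] := exA m0 cop det nc.
exists (mx2 x y 0 z); first exact: Xstar_intro.
exists (mx2 p q r s); first by apply/Gamma0_mx2P.
by rewrite mulXform mulBform e1 e2 e3 e4.
Qed.

Lemma inj_core n m Ri Rj X : Ri \in Gamma0 n -> Rj \in Gamma0 n -> X \in Xstar m ->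
  Rel n m Ri X -> Rel n m Rj X -> in_right_coset (n * m) Rj Ri.
Proof.
move=> + + /XstarP[x[y[z[-> [xz _ _ _ _]]]]].
have [a[b[c[d ->]]]] := mx2_ex Ri; have [a'[b'[c'[d' ->]]]] := mx2_ex Rj.
move=> /Gamma0_mx2P[di _] /Gamma0_mx2P[dj _] [gi giG ei] [gj gjG ej].
have [p[q[r[s eg1]]]] := mx2_ex gi; have [p'[q'[r'[s' eg2]]]] := mx2_ex gj; subst gi gj.
move: giG gjG => /Gamma0_mx2P[_ nr] /Gamma0_mx2P[_ nr'].
move: ei ej; rewrite !mulXform !mulBform => /mx2_inj[_ _ ec ed] /mx2_inj[_ _ ec' ed'].
exists (mx2 (a*d' - b*c') (b*a' - a*b') (c*d' - d*c') (d*a' - c*b')).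
  apply/Gamma0_mx2P; split.
    transitivity ((a*d - b*c) * (a'*d' - b'*c')); first ring.
    by rewrite di dj mulr1.
  have -> : c*d' - d*c' = (r*s' - s*r') * (x*z) by rewrite -ec -ec' -ed -ed'; ring.
  rewrite xz PoszM; apply: dvdz_mul; last exact: dvdzz.
  by apply: rpredB; [exact: dvdz_mulr | exact: dvdz_mull].
rewrite mulmx2; congr mx2.
- transitivity (a * (a'*d' - b'*c')); first by rewrite dj mulr1.
  ring.
- transitivity (b * (a'*d' - b'*c')); first by rewrite dj mulr1.
  ring.
- transitivity (c * (a'*d' - b'*c')); first by rewrite dj mulr1.
  ring.
- transitivity (d * (a'*d' - b'*c')); first by rewrite dj mulr1.
  ring.
Qed.

Lemma Gamma0M n g1 g2 : g1 \in Gamma0 n -> g2 \in Gamma0 n -> g1 *m g2 \in Gamma0 n.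
Proof.
have [a[b[c[d ->]]]] := mx2_ex g1; have [a'[b'[c'[d' ->]]]] := mx2_ex g2.
move=> /Gamma0_mx2P[d1 n1] /Gamma0_mx2P[d2 n2].
rewrite mulmx2; apply/Gamma0_mx2P; split.
  transitivity ((a*d - b*c) * (a'*d' - b'*c')); first ring.
  by rewrite d1 d2 mulr1.
by apply: rpredD; [exact: dvdz_mulr | exact: dvdz_mull].
Qed.

Lemma surj_core n m k (R : 'I_k -> 'M[int]_2) X : (0 < n)%N -> coprime n m ->
  right_coset_reps n m R -> X \in Xstar m -> exists j, Rel n m (R j) X.
Proof.
move=> n0 cop hR; case: hR => G1 G2 G3; move=> /XstarP[x[y[z[-> [xz x1 y0 yz g]]]]].
have z0 : 0 <= z by lia.
have [P[Q[s bez]]] := exB n0 cop xz x1 y0 z0 g.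
set R0 := mx2 P (-Q) (n%:Z*x) (n%:Z*y + s*z).
have R0G : R0 \in Gamma0 n.
  apply/Gamma0_mx2P; split; first by rewrite -bez; ring.
  by apply: dvdz_mulr; exact: dvdzz.
have [j [h hG eh]] := G2 _ R0G.
exists j.
have [al[be[ga[de eh']]]] := mx2_ex h; subst h.
move: hG => /Gamma0_mx2P[dh /dvdzP[t et]].
rewrite PoszM in et.
set g0 := mx2 (z*P) (-(P*y) - x*Q) n%:Z s.
set h2 := mx2 de (-(m%:Z*be)) (-(n%:Z*t)) al.
have g0G : g0 \in Gamma0 n.
  apply/Gamma0_mx2P; split; first by rewrite -bez; ring.
  exact: dvdzz.
have h2G : h2 \in Gamma0 n.
  apply/Gamma0_mx2P; split.
    by rewrite -dh et; ring.
  by rewrite rpredN; apply: dvdz_mulr; exact: dvdzz.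
exists (h2 *m g0); first exact: Gamma0M.
have e0 : g0 *m mx2 x y 0 z = Bm m *m R0.
  rewrite mulXform mulBform -xz; congr mx2; ring.
rewrite -mulmxA e0 eh !mulmxA; congr (_ *m _).
rewrite /h2 /Bm !mulmx2; congr mx2.
- transitivity (m%:Z * (al * de - be * ga)); first by rewrite et; ring.
  by rewrite dh mulr1.
- ring.
- rewrite et; ring.
- transitivity (al * de - be * ga); first by rewrite et; ring.
  exact: dh.
Qed.

Lemma Gamma0_1 N : (1%:M : 'M[int]_2) \in Gamma0 N.
Proof. by rewrite unfold_in /Gamma0 det1 eqxx mxE /= dvdz0. Qed.

Arguments part1 {n m M}.
Arguments BRA_iff {n m R X}.
Arguments inj_core {n m Ri Rj X}.
Arguments Rel_uniq {n m R X Y}.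
Arguments surj_core {n m k R} X.

Theorem mainTheorem5 (n m : nat) (hn : (0 < n)%N) (hm : (0 < m)%N)
  (hcop : coprime n m) (k : nat) (R : 'I_k -> 'M[int]_2)
  (hR : right_coset_reps n m R) :
  (forall j : 'I_k, exists2 A, A \in Xstar m & BRAinv_in_Gamma0 n m (R j) A) /\
  (forall A : 'I_k -> 'M[int]_2,
     (forall j, A j \in Xstar m /\ BRAinv_in_Gamma0 n m (R j) (A j)) ->
     injective A /\ (forall X, X \in Xstar m -> exists j, A j = X)).
Proof.
have [G1 G2 G3] := hR.
split.
  move=> j; have [X XS rel] := part1 hm hcop (G1 j).
  by exists X => //; apply/(BRA_iff hm XS).
move=> A hA.
have relA j : Rel n m (R j) (A j).
  by case: (hA j) => XS /(BRA_iff hm XS).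
split.
  move=> i j eij; apply: (G3 i j (R i)).
    by exists 1%:M; [exact: Gamma0_1 | rewrite mul1mx].
  apply: (inj_core (G1 i) (G1 j) (hA i).1 (relA i)).
  by rewrite eij; exact: relA.
move=> X XS; have [j rj] := surj_core X hn hcop hR XS.
by exists j; apply: (Rel_uniq (hA j).1 XS (relA j) rj).
Qed.
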